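(* Let $\eta\in(0,1)$ and let $\mathbf{u}_T\in\mathbb{R}^{d_x}$, $\mathbf{v}_T\in\mathbb{R}^{d_y}$ be nonzero. If $\frac1{\sqrt2}\cdot\frac{\mathbf{u}^{*\top}\Sigma_{xx}\mathbf{u}_T+\mathbf{v}^{*\top}\Sigma_{yy}\mathbf{v}_T}{\sqrt{\mathbf{u}_T^\top\Sigma_{xx}\mathbf{u}_T+\mathbf{v}_T^\top\Sigma_{yy}\mathbf{v}_T}}\ge1-\frac\eta4,$ then $\mathrm{align}((\mathbf{u}_T,\mathbf{v}_T);(\mathbf{u}^*,\mathbf{v}^* ))=\frac12\Big(\frac{\mathbf{u}^{*\top}\Sigma_{xx}\mathbf{u}_T}{\sqrt{\mathbf{u}_T^\top\Sigma_{xx}\mathbf{u}_T}}+\frac{\mathbf{v}^{*\top}\Sigma_{yy}\mathbf{v}_T}{\sqrt{\mathbf{v}_T^\top\Sigma_{yy}\mathbf{v}_T}}\Big)\ge1-\eta.$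
   Context: $\Sigma_{xx}\in\mathbb{R}^{d_x\times d_x}$, $\Sigma_{yy}\in\mathbb{R}^{d_y\times d_y}$ are positive definite (population auto-covariances of zero-mean random vectors $\mathbf{x},\mathbf{y}$), $\Sigma_{xy}$ the cross-covariance, $\mathbf{T}=\Sigma_{xx}^{-1/2}\Sigma_{xy}\Sigma_{yy}^{-1/2}$ with unit top singular vector pair $(\mathbf{a}_1,\mathbf{b}_1)$, and $(\mathbf{u}^*,\mathbf{v}^* )=(\Sigma_{xx}^{-1/2}\mathbf{a}_1,\Sigma_{yy}^{-1/2}\mathbf{b}_1)$, so that $\mathbf{u}^{*\top}\Sigma_{xx}\mathbf{u}^*=\mathbf{v}^{*\top}\Sigma_{yy}\mathbf{v}^*=1$. *)

(* Defs.v *)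
From HB Require Import structures.
From mathcomp Require Import all_boot all_order all_algebra.
Set Implicit Arguments. Unset Strict Implicit. Unset Printing Implicit Defensive.
Import Order.TTheory GRing.Theory Num.Theory.
Local Open Scope ring_scope.

Definition bform (R : rcfType) (n : nat) (x : 'cV[R]_n) (S : 'M[R]_n) (y : 'cV[R]_n) : R :=
  (x^T *m S *m y) 0 0.

Definition bil (R : rcfType) (m n : nat) (a : 'cV[R]_m) (M : 'M[R]_(m, n)) (b : 'cV[R]_n) : R :=
  (a^T *m M *m b) 0 0.

Definition posdef (R : rcfType) (n : nat) (S : 'M[R]_n) : Prop :=
  S^T = S /\ forall x : 'cV[R]_n, x != 0 -> 0 < bform x S x.

Definition is_inv_sqrt (R : rcfType) (n : nat) (S H : 'M[R]_n) : Prop :=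
  posdef H /\ H *m H = invmx S.

Definition unitv (R : rcfType) (n : nat) (a : 'cV[R]_n) : Prop := (a^T *m a) 0 0 = 1.

Definition top_singular_pair (R : rcfType) (m n : nat) (T : 'M[R]_(m, n))
    (a : 'cV[R]_m) (b : 'cV[R]_n) : Prop :=
  unitv a /\ unitv b /\
  exists s : R, 0 <= s /\ T *m b = s *: a /\ T^T *m a = s *: b /\
    (forall (a' : 'cV[R]_m) (b' : 'cV[R]_n), unitv a' -> unitv b' -> bil a' T b' <= s).

Definition align (R : rcfType) (dx dy : nat) (Sxx : 'M[R]_dx) (Syy : 'M[R]_dy)
    (u : 'cV[R]_dx) (v : 'cV[R]_dy) (us : 'cV[R]_dx) (vs : 'cV[R]_dy) : R :=
  2^-1 * (bform us Sxx u / Num.sqrt (bform u Sxx u)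
          + bform vs Syy v / Num.sqrt (bform v Syy v)).

(* Main.v *)
From HB Require Import structures.
From mathcomp Require Import all_boot all_order all_algebra.
From mathcomp Require Import ring lra.
Require Import Defs.
Import Order.TTheory GRing.Theory Num.Theory.
Local Open Scope ring_scope.
Lemma core_wlog (R : realFieldType) (a b s p q e : R) : 0 < a -> 0 < b -> b <= a -> 0 < s ->
  s ^+ 2 = 2 * (a ^+ 2 + b ^+ 2) -> p <= a -> q <= b -> 0 < e -> e < 1 ->
  (1 - e / 4) * s <= p + q -> 2 - 2 * e <= p / a + q / b.
Proof.
move=> a0 b0 ba s0 sE pa qb e0 e1 H.
have sab : a + b <= s.
  have : (a + b) ^+ 2 <= s ^+ 2 by rewrite sE; nra.
  nra.
have amgm : (a + b) * s <= (s ^+ 2 + (a + b) ^+ 2) / 2 by nra.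
have key : a + b - (1 - e / 4) * s <= 2 * e * b.
  have : (a + b) * s - (1 - e / 4) * s ^+ 2 <= 2 * e * b * s.
    have : 2 * e * b * (a + b) <= 2 * e * b * s.
      by rewrite ler_pM2l // !mulr_gt0.
    rewrite sE in amgm *.
    have : 0 <= (1 - e) * (a - b) ^+ 2 by apply: mulr_ge0; [lra|exact: sqr_ge0].
    have : 0 <= e * b * (a - b) by apply: mulr_ge0; [apply: mulr_ge0|]; lra.
    have : 0 <= e * b ^+ 2 by apply: mulr_ge0; [lra|exact: sqr_ge0].
    nra.
  nra.
have XY : (a - p) + (b - q) <= 2 * e * b by lra.
have h1 : b * ((a - p) / a) <= a - p.
  rewrite mulrA ler_pdivrMr //; nra.
have h2 : b * ((b - q) / b) = b - q by field; rewrite lt0r_neq0.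
have : (a - p) / a + (b - q) / b <= 2 * e.
  rewrite -(ler_pM2l b0); nra.
have -> : (a - p) / a = 1 - p / a by field; rewrite lt0r_neq0.
have -> : (b - q) / b = 1 - q / b by field; rewrite lt0r_neq0.
lra.
Qed.
Lemma core (R : realFieldType) (a b s p q e : R) : 0 < a -> 0 < b -> 0 < s ->
  s ^+ 2 = 2 * (a ^+ 2 + b ^+ 2) -> p <= a -> q <= b -> 0 < e -> e < 1 ->
  (1 - e / 4) * s <= p + q -> 2 - 2 * e <= p / a + q / b.
Proof.
move=> a0 b0 s0 sE pa qb e0 e1 H; have [ba|ab] := lerP b a.
  exact: (@core_wlog _ _ _ _ _ _ _ a0 b0 ba s0 sE pa qb e0 e1 H).
rewrite [p / a + _]addrC; apply: (@core_wlog _ _ _ _ _ _ _ b0 a0 (ltW ab) s0 _ qb pa e0 e1).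
  by rewrite sE [b ^+ 2 + _]addrC.
by rewrite [q + _]addrC.
Qed.


Section M.
Variable R : rcfType.

Lemma bformDl n (S : 'M[R]_n) (x y z : 'cV[R]_n) (a b : R) :
  bform (a *: x + b *: y) S z = a * bform x S z + b * bform y S z.
Proof.
by rewrite /bform raddfD /= !linearZ /= !mulmxDl -!scalemxAl !mxE.
Qed.

Lemma bformDr n (S : 'M[R]_n) (x y z : 'cV[R]_n) (a b : R) :
  bform z S (a *: x + b *: y) = a * bform z S x + b * bform z S y.
Proof.
by rewrite /bform !mulmxDr -!scalemxAr !mxE.
Qed.

Lemma bform_sym n (S : 'M[R]_n) (x y : 'cV[R]_n) : S^T = S ->
  bform x S y = bform y S x.
Proof.
move=> sS; have tr (M : 'M[R]_1) : M 0 0 = M^T 0 0 by rewrite mxE.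
rewrite /bform tr.
by rewrite !trmx_mul trmxK sS mulmxA.
Qed.

Lemma bform_ge0 n (S : 'M[R]_n) x : posdef S -> 0 <= bform x S x.
Proof.
move=> [_ pS]; have [->|nz] := eqVneq x 0; last exact: ltW (pS _ nz).
by rewrite /bform mulmx0 mxE.
Qed.

Lemma bform_cs n (S : 'M[R]_n) x y : posdef S ->
  bform x S y ^+ 2 <= bform x S x * bform y S y.
Proof.
move=> pS; have [->|nz] := eqVneq y 0.
  by rewrite /bform !mulmx0 !mxE expr2 mul0r mulr0.
set B := bform y S y; set c := bform x S y.
have B0 : 0 < B by apply: pS.2.
have := @bform_ge0 _ S (B *: x + (- c) *: y) pS.
rewrite bformDl !bformDr (@bform_sym _ S y x pS.1) -/B -/c => h.
have : 0 <= B * (B * bform x S x - c ^+ 2) by nra.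
by rewrite pmulr_rge0 // subr_ge0 mulrC.
Qed.

Lemma posdef_unit n (S : 'M[R]_n) : posdef S -> S \in unitmx.
Proof.
move=> [_ pS]; rewrite -row_free_unit -kermx_eq0; apply/eqP.
apply/row_matrixP => i; rewrite row0; apply/eqP; apply/negPn/negP => nz.
have nz' : (row i (kermx S))^T != 0.
  by apply: contra nz => /eqP h; rewrite -[row _ _]trmxK h trmx0.
have := pS _ nz'; rewrite /bform trmxK -row_mul mulmx_ker row0 mul0mx mxE.
by rewrite ltxx.
Qed.

Lemma cs_sqrt n (S : 'M[R]_n) x y : posdef S -> bform y S y = 1 ->
  bform y S x <= Num.sqrt (bform x S x).
Proof.
move=> pS y1; have := @bform_cs _ S y x pS; rewrite y1 mul1r.
have A0 := @bform_ge0 _ S x pS.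
rewrite -{1}(sqr_sqrtr A0) => h.
have s0 : 0 <= Num.sqrt (bform x S x) by apply: sqrtr_ge0.
nra.
Qed.

Lemma unit_form n (S H : 'M[R]_n) (a : 'cV[R]_n) : posdef S -> is_inv_sqrt S H ->
  unitv a -> bform (H *m a) S (H *m a) = 1.
Proof.
move=> pS [[sH _] HH] ua.
have Su := @posdef_unit _ S pS.
have e1 : H *m (H *m S) = 1%:M by rewrite mulmxA HH mulVmx.
have [Hu _] := mulmx1_unit e1.
have e2 : H *m S *m H = 1%:M.
  by rewrite -[H *m S](mulKmx Hu) mulmxA -mulmxA e1 mulmx1 mulVmx.
rewrite /bform trmx_mul sH.
have -> : a^T *m H *m S *m (H *m a) = a^T *m (H *m S *m H) *m a by rewrite !mulmxA.
by rewrite e2 mulmx1.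
Qed.

End M.

Lemma final (R : rcfType) (A B p q eta : R) : 0 < A -> 0 < B ->
  p <= Num.sqrt A -> q <= Num.sqrt B -> 0 < eta -> eta < 1 ->
  1 - eta / 4 <= (Num.sqrt 2)^-1 * ((p + q) / Num.sqrt (A + B)) ->
  1 - eta <= 2^-1 * (p / Num.sqrt A + q / Num.sqrt B).
Proof.
move=> A0 B0 pa qb e0 e1 H.
have a0 : 0 < Num.sqrt A by rewrite sqrtr_gt0.
have b0 : 0 < Num.sqrt B by rewrite sqrtr_gt0.
have r20 : 0 < Num.sqrt (2 : R) by rewrite sqrtr_gt0.
have ab0 : 0 < Num.sqrt (A + B) by rewrite sqrtr_gt0 addr_gt0.
set s := Num.sqrt 2 * Num.sqrt (A + B).
have s0 : 0 < s by rewrite mulr_gt0.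
have sE : s ^+ 2 = 2 * (Num.sqrt A ^+ 2 + Num.sqrt B ^+ 2).
  rewrite exprMn !sqr_sqrtr ?ltW ?addr_gt0 //.
have Hs : (1 - eta / 4) * s <= p + q.
  have -> : p + q = (Num.sqrt 2)^-1 * ((p + q) / Num.sqrt (A + B)) * s.
    by rewrite /s; field; rewrite !lt0r_neq0.
  by rewrite ler_pM2r.
have := @core _ _ _ _ _ _ _ a0 b0 s0 sE pa qb e0 e1 Hs.
lra.
Qed.

Theorem lemma9 (R : rcfType) (dx dy : nat)
    (Sxx : 'M[R]_dx) (Syy : 'M[R]_dy) (Sxy : 'M[R]_(dx, dy))
    (Hx : 'M[R]_dx) (Hy : 'M[R]_dy) (a1 : 'cV[R]_dx) (b1 : 'cV[R]_dy)
    (eta : R) (uT : 'cV[R]_dx) (vT : 'cV[R]_dy) :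
  posdef Sxx -> posdef Syy ->
  is_inv_sqrt Sxx Hx -> is_inv_sqrt Syy Hy ->
  top_singular_pair (Hx *m Sxy *m Hy) a1 b1 ->
  0 < eta < 1 ->
  uT != 0 -> vT != 0 ->
  let us := Hx *m a1 in
  let vs := Hy *m b1 in
  1 - eta / 4 <=
    (Num.sqrt 2)^-1 * ((bform us Sxx uT + bform vs Syy vT)
                        / Num.sqrt (bform uT Sxx uT + bform vT Syy vT)) ->
  1 - eta <= align Sxx Syy uT vT us vs.
Proof.
move=> pX pY iX iY [ua [ub _]] /andP[e0 e1] u0 v0 us vs H.
have usn : bform us Sxx us = 1 by apply: unit_form.
have vsn : bform vs Syy vs = 1 by apply: unit_form.
set A := bform uT Sxx uT in H *; set B := bform vT Syy vT in H *.
set p := bform us Sxx uT in H *; set q := bform vs Syy vT in H *.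
have A0 : 0 < A by apply: pX.2.
have B0 : 0 < B by apply: pY.2.
have pa : p <= Num.sqrt A by exact: (@cs_sqrt _ _ Sxx uT us pX usn).
have qb : q <= Num.sqrt B by exact: (@cs_sqrt _ _ Syy vT vs pY vsn).
rewrite /align -/A -/B -/p -/q.
exact: (@final _ A B p q eta A0 B0 pa qb e0 e1 H).
Qed.
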